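(* Let $\mathcal{G}$ be a connected undirected network graph with a given set of monitors, let $\mathcal{B}$ be a biconnected component of $\mathcal{G}$, and let $\mathcal{T}$ be a triconnected component of $\mathcal{B}$ with vantages $\{\mu_i\}$. Then for each vantage $\mu_i$ there exists an external $\mu_i$-to-agent path $\mathcal{P}_i$ (where $\mathcal{P}_i$ is the degenerate single-node path $\mu_i$ if $\mu_i$ is an agent) such that $\mathcal{P}_i$ is internally vertex disjoint from all the other $\mu_j$-to-agent paths $\mathcal{P}_j$, $j\neq i$.
   Context: $\mathcal{G}$ is an undirected connected graph; some nodes are monitors. A biconnected component is a maximal 2-vertex-connected subgraph (or a bridge). For a biconnected component $\mathcal{B}$, a node $v\in V(\mathcal{B})$ is an agent of $\mathcal{B}$ if $v$ is a monitor, or $v$ is a cut-vertex of $\mathcal{G}$ through which $\mathcal{B}$ is connected to a monitor outside $\mathcal{B}$. The triconnected components of $\mathcal{B}$ are obtained by the standard (Hopcroft–Tarjan) decomposition: repeatedly splitting along 2-vertex cuts $\{a,b\}$, adding a virtual link $ab$ to each side, until every piece is 3-vertex-connected, a triangle, or a single link. For a triconnected component $\mathcal{T}$ of $\mathcal{B}$, a node of $\mathcal{T}$ is a vantage if it is an agent of $\mathcal{B}$, or it belongs to a 2-vertex cut $\{a,b\}\subseteq V(\mathcal{T})$ of $\mathcal{B}$ that separates $\mathcal{T}$ from some agent of $\mathcal{B}$. An external $\mu$-to-agent path is a path in $\mathcal{G}$ from the vantage $\mu$ to an agent of $\mathcal{B}$ none of whose vertices other than $\mu$ lies in $\mathcal{T}$.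 Two paths are internally vertex disjoint if no internal vertex of either path lies on the other path (they may share end-points). *)

(* Defs.v *)
(* Finite simple graphs over a finType V, given by a
   symmetric irreflexive relation G : rel V. *)
From mathcomp Require Import all_boot.
Set Implicit Arguments. Unset Strict Implicit. Unset Printing Implicit Defensive.

Section Defs.
Variable V : finType.
Variable G : rel V.

Definition induced (S : {set V}) : rel V :=
  [rel x y | [&& x \in S, y \in S & G x y]].

Definition connected_on (S : {set V}) : Prop :=
  forall u w, u \in S -> w \in S -> connect (induced S) u w.

Definition two_connected (S : {set V}) : Prop :=
  3 <= #|S| /\ connected_on S /\ forall v, v \in S -> connected_on (S :\ v).

Definition bridge_set (S : {set V}) : Prop :=
  exists u v, [/\ u != v, S = [set u; v] & G u v].

(* biconnected component: maximal 2-vertex-connected subgraph, or a bridge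
   (biconnected components are induced subgraphs, so they are given by
   their vertex sets) *)
Definition biconnected_component (B : {set V}) : Prop :=
  (two_connected B \/ bridge_set B) /\
  forall S, (two_connected S \/ bridge_set S) -> B \subset S -> S = B.

Definition cut_vertex (v : V) : Prop :=
  exists u w, [/\ u != v, w != v & ~~ connect (induced (~: [set v])) u w].

Definition agent (M B : {set V}) (v : V) : Prop :=
  v \in B /\
  (v \in M \/
   (cut_vertex v /\
    exists (m : V) (p : seq V),
      [/\ m \in M, m \notin B, path G v p, last v p = m & all (fun x => x \notin B) p])).

(* A multigraph on V is a sequence of links, each link being its 2-element set
   of end-points; parallel links (real or virtual) are repeated entries. *)
Definition vset (E : seq {set V}) : {set V} := \bigcup_(e <- E) e.

Definition links_of (B : {set V}) : seq {set V} :=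
  enum [set e : {set V} | (e \subset B) &&
                          [exists u, exists v, (e == [set u; v]) && G u v]].

(* splitting the multigraph E along the 2-vertex cut {a,b}: E is divided into
   E1, E2 with at least two links each, sharing exactly the vertices a, b;
   a virtual link ab is added to each side. *)
Definition split_at (E : seq {set V}) (a b : V) (E1' E2' : seq {set V}) : Prop :=
  a != b /\
  exists E1 E2 : seq {set V},
    [/\ perm_eq E (E1 ++ E2), 2 <= size E1, 2 <= size E2,
        vset E1 :&: vset E2 = [set a; b] &
        E1' = [set a; b] :: E1 /\ E2' = [set a; b] :: E2].

Inductive split_pieces (B : {set V}) : seq (seq {set V}) -> Prop :=
| sp_init : split_pieces B [:: links_of B]
| sp_step Ps P a b P1 P2 :
    split_pieces B Ps -> P \in Ps -> split_at P a b P1 P2 ->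
    split_pieces B (P1 :: P2 :: rem P Ps).

Definition fully_split (Ps : seq (seq {set V})) : Prop :=
  forall P a b P1 P2, P \in Ps -> ~ split_at P a b P1 P2.

Definition triconnected_component (B T : {set V}) : Prop :=
  exists Ps P, [/\ split_pieces B Ps, fully_split Ps, P \in Ps & T = vset P].

Definition two_cut (B : {set V}) (a b : V) : Prop :=
  [/\ a != b, a \in B, b \in B &
      exists u w, [/\ u \in B :\: [set a; b], w \in B :\: [set a; b] &
                      ~~ connect (induced (B :\: [set a; b])) u w]].

Definition separates (M B T : {set V}) (a b w : V) : Prop :=
  [/\ two_cut B a b, agent M B w, w \notin [set a; b] &
      exists x, x \in T :\: [set a; b] /\
                ~~ connect (induced (B :\: [set a; b])) w x].

Definition vantage (M B T : {set V}) (v : V) : Prop :=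
  v \in T /\
  (agent M B v \/
   exists a b w, [/\ v \in [set a; b], a \in T, b \in T & separates M B T a b w]).

(* a path is given by its start vertex x and the sequence p of the following
   vertices; it is simple if x :: p is duplicate-free *)
Definition external_path (M B T : {set V}) (mu : V) (p : seq V) : Prop :=
  [/\ path G mu p, uniq (mu :: p), agent M B (last mu p) &
      all (fun x => x \notin T) p].

(* internal vertices of the path x :: p (all but the two end-points) *)
Definition inner (x : V) (p : seq V) : seq V := behead (belast x p).

End Defs.

(* Main.v *)
Require Import Defs.
From mathcomp Require Import all_boot.
From Stdlib Require Import Classical ClassicalEpsilon.
Set Implicit Arguments. Unset Strict Implicit. Unset Printing Implicit Defensive.


Ltac orsolve := repeat (match goal with H : is_true (_ || _) |- _ => case/orP: H => H end);
  try (match goal with H : is_true _ |- _ => by rewrite H ?orbT end).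

Section Gen.
Variable V : finType.

Lemma conn_ind (e : rel V) (P : V -> Prop) x y :
  connect e x y -> P x -> (forall u v, e u v -> P u -> P v) -> P y.
Proof.
move=> /connectP [p pth ->]; elim: p x pth => [|z p IH] x //= /andP [exz pz] Px Hs.
exact: (IH z pz (Hs _ _ exz Px) Hs).
Qed.

Lemma conn_map (e e' : rel V) (f : V -> V) x y :
  connect e x y -> (forall u v, e u v -> f u = f v \/ e' (f u) (f v)) ->
  connect e' (f x) (f y).
Proof.
move=> c H; apply: (conn_ind (P := fun z => connect e' (f x) (f z)) c) => // u v euv cu.
case: (H u v euv) => [<- // | e'uv]; exact: connect_trans cu (connect1 e'uv).
Qed.

Lemma conn_mono (e e' : rel V) x y :
  (forall u v, e u v -> e' u v) -> connect e x y -> connect e' x y.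
Proof. by move=> H; apply: connect_sub => u v /H /connect1. Qed.

Definition relK (e : rel V) (K : {set V}) := [rel p q | (p \in K) && (q \in K) && e p q].

Lemma exitP (e : rel V) (K : {set V}) x y : connect e x y -> x \in K -> y \notin K ->
  exists u v, [/\ u \in K, v \notin K, e u v & connect (relK e K) x u].
Proof.
move=> /connectP [p pth ->]; elim: p x pth => [|z p IH] x /=; first by move=> _ ->.
move=> /andP [exz pz] xK yK; case zK: (z \in K).
  have [u [v [uK vK euv c]]] := IH z pz zK yK.
  exists u, v; split => //; apply: connect_trans c; apply: connect1; by rewrite /= xK zK.
by exists x, z; split => //; rewrite zK.
Qed.

Lemma two_in_size (T : eqType) (s : seq T) x y : x \in s -> y \in s -> x != y -> 1 < size s.
Proof.
case: s => [|z [|z' s]] //=; rewrite !inE => /eqP -> /eqP ->; by rewrite eqxx.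
Qed.

Lemma inner_sub (x : V) p z : z \in inner x p -> z \in p.
Proof. case: p => [|y p] //=; rewrite /inner /= => /mem_belast //. Qed.

Lemma inner_last (x : V) p z : uniq p -> z \in inner x p -> z != last x p.
Proof.
case: p => [|y p] //; rewrite /inner /= => u; have : uniq (y :: p) by [].
rewrite lastI rcons_uniq => /andP [nl _].
by apply: contraTneq => ->.
Qed.

Lemma set2_eq (c d u v : V) : [set c; d] = [set u; v] -> (c = u /\ d = v) \/ (c = v /\ d = u).
Proof.
move=> E.
have cin : c \in [set u; v] by rewrite -E !inE eqxx.
have din : d \in [set u; v] by rewrite -E !inE eqxx orbT.
have uin : u \in [set c; d] by rewrite E !inE eqxx.
have vin : v \in [set c; d] by rewrite E !inE eqxx orbT.
move: cin din uin vin; rewrite !inE.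
case/orP=> /eqP ec; case/orP => /eqP ed; subst; rewrite ?eqxx ?orbT /=; auto.
- by move=> _; rewrite orbb => /eqP ->; auto.
- by rewrite orbb => /eqP -> _; auto.
Qed.

End Gen.

Lemma uniq_ins (T : eqType) (X Y Z : seq T) :
  uniq (X ++ Y) -> uniq Z -> (forall z, z \in Z -> z \notin X ++ Y) -> uniq (X ++ Z ++ Y).
Proof.
move=> u1 u2 H; rewrite (perm_uniq (permEl (perm_catCA X Z Y))) cat_uniq u1 u2 /= andbT.
by apply/hasPn => z zXY; apply/negP => /H; rewrite zXY.
Qed.


Section Graph.
Variable V : finType.
Variable G : rel V.
Hypothesis symG : symmetric G.
Hypothesis irrG : irreflexive G.

Lemma induced_sym (S : {set V}) : symmetric (induced G S).
Proof. by move=> x y; rewrite /induced /= symG andbCA. Qed.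

Lemma conn_sym (S : {set V}) x y : connect (induced G S) x y = connect (induced G S) y x.
Proof. exact: (sym_connect_sym (induced_sym S)). Qed.

Lemma conn_end (S : {set V}) x y : connect (induced G S) x y -> x = y \/ (x \in S /\ y \in S).
Proof.
move=> /connectP [[|z p] /=]; first by move=> _ ->; left.
move=> /andP [/andP [xS /andP [zS _]] pth] ->; right; split => //.
have c : connect (induced G S) z (last z p) by apply/connectP; exists p.
apply: (conn_ind (P := fun v => v \in S) c) => //.
by move=> u v /andP [_ /andP []].
Qed.

Lemma conn_sub (S1 S2 : {set V}) x y : S1 \subset S2 ->
  connect (induced G S1) x y -> connect (induced G S2) x y.
Proof.
move=> /subsetP sub; apply: conn_mono => u v /andP [/sub uS /andP [/sub vS g]].
by rewrite /induced /= uS vS g.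
Qed.

Lemma path_in (K : {set V}) x s : path (induced G K) x s -> all (fun z => z \in K) s.
Proof. elim: s x => [|y s IH] x //= /andP [/andP [_ /andP [-> _]] /IH]. done. Qed.

Lemma path_G (K : {set V}) x s : path (induced G K) x s -> path G x s.
Proof. by apply: sub_path => u v /andP [_ /andP [_ ->]]. Qed.

Lemma relK_ind (S K : {set V}) u v : relK (induced G S) K u v -> induced G K u v.
Proof. by rewrite /induced /= => /andP [/andP [-> ->] /andP [_ /andP [_ ->]]]. Qed.

Definition gcomp (S : {set V}) w := [set z in S | connect (induced G S) w z].

Lemma comp_conn S w z : z \in gcomp S w -> connect (induced G (gcomp S w)) w z.
Proof.
rewrite inE => /andP [_ c].
have : connect (induced G (gcomp S w)) w z /\ connect (induced G S) w z.
  apply: (conn_ind (P := fun v => connect (induced G (gcomp S w)) w v /\ connect (induced G S) w v) c).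
    by split; apply: connect0.
  move=> u v euv [c1 c2]; have c3 := connect_trans c2 (connect1 euv).
  split => //; apply: connect_trans c1 (connect1 _).
  move: euv => /andP [uS /andP [vS guv]].
  by rewrite /induced /= !inE uS vS c2 c3 guv.
by case.
Qed.

Lemma comp_closed S w u v : u \in gcomp S w -> v \in S -> G u v -> v \in gcomp S w.
Proof.
rewrite !inE => /andP [uS c] vS guv; rewrite vS /=.
apply: connect_trans c (connect1 _); by rewrite /induced /= uS vS guv.
Qed.

Lemma comp_sub S w : gcomp S w \subset S.
Proof. by apply/subsetP => z; rewrite inE => /andP []. Qed.

End Graph.


Section Fan.
Variable V : finType.
Variable G : rel V.
Hypothesis symG : symmetric G.
Hypothesis irrG : irreflexive G.

Definition goodQ (R : {set V}) (a b : V) (q : seq V) :=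
  [/\ path G a q, last a q = b, uniq (a :: q) & all (fun z => (z \in R) || (z == b)) q].

Lemma revQ (a : V) q : last a q :: rev (belast a q) = rev (a :: q).
Proof. by rewrite [in RHS]lastI rev_rcons. Qed.

Lemma revQ_mem (a : V) q z : (z \in last a q :: rev (belast a q)) = (z \in a :: q).
Proof. by rewrite revQ mem_rev. Qed.

Lemma good_rev R a b q : a != b -> goodQ R a b q -> goodQ R b a (rev (belast a q)).
Proof.
move=> ab [pq lq uq aq]; split.
- rewrite -lq rev_path; rewrite (@eq_path _ _ G) //; move=> x y /=; exact: symG.
- by rewrite -[last b _](last_cons a) -{1}lq revQ /= rev_cons last_rcons.
- by rewrite -lq revQ rev_uniq.
- apply/allP => z; rewrite mem_rev => zb.
  have := mem_belast zb; rewrite inE => /orP [->|zq]; first by rewrite orbT.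
  move/allP: aq => /(_ z zq) /orP [->//|/eqP zeb].
  move: uq; rewrite lastI rcons_uniq => /andP [nb _].
  by move: nb; rewrite lq -zeb zb.
Qed.

Lemma step_after (R : {set V}) (a b : V) q q1 q2 (w' w : V) s h :
  goodQ R a b q -> q = q1 ++ w' :: q2 -> h \in q2 -> G w' w -> path G w s ->
  G (last w s) h -> uniq (w :: s) ->
  (forall z, z \in w :: s -> (z \in R) && (z \notin a :: q)) ->
  exists q', goodQ R a b q' /\ w \in q'.
Proof.
move=> [pq lq uq aq] Eq hq2 gw pws gh us Hs.
case/splitPr: hq2 Eq => q21 q22 Eq; subst q.
exists (q1 ++ w' :: w :: s ++ h :: q22); split; last by rewrite mem_cat !inE eqxx !orbT.
split.
- move: pq; rewrite !cat_path /= !cat_path /=.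
  by case/and5P => -> -> _ _ ->; rewrite gw pws gh.
- by move: lq; rewrite !last_cat /= !last_cat /=.
- have -> : a :: q1 ++ [:: w', w & s ++ h :: q22] =
            (a :: q1 ++ [:: w']) ++ (w :: s) ++ (h :: q22) by rewrite /= -catA.
  apply: uniq_ins => //.
  + apply: subseq_uniq uq; rewrite /= -catA /=.
    rewrite eqxx; apply: cat_subseq (subseq_refl q1) _ => /=; rewrite eqxx.
    exact: suffix_subseq.
  + move=> z /Hs /andP [_]; apply: contra => H; rewrite !(mem_cat, inE) in H *; orsolve.
- apply/allP => z H.
  have /orP [zR|] : (z \in w :: s) || (z \in q1 ++ w' :: q21 ++ h :: q22).
    rewrite !(mem_cat, inE) in H *; orsolve.
  + by move: (Hs z zR) => /andP [->].
  + by move/allP: aq => /(_ z).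
Qed.

Variable B : {set V}.
Hypothesis twoB : forall v, connected_on G (B :\ v).

Lemma step_full (R : {set V}) (a b : V) q (w' w : V) :
  a != b -> a \in B -> b \in B -> R \subset B :\: [set a; b] ->
  (forall u v, u \in R -> v \in B :\: [set a; b] -> G u v -> v \in R) ->
  goodQ R a b q -> w' \in q -> w' \in R -> w \in R -> G w' w ->
  exists q', goodQ R a b q' /\ w \in q'.
Proof.
move=> ab aB bB /subsetP RS clR gq w'q w'R wR gw.
case wq: (w \in q); first by exists q.
have aR : a \notin R by apply/negP => /RS; rewrite !inE eqxx.
have bR : b \notin R by apply/negP => /RS; rewrite !inE eqxx orbT.
have ww' : w != w' by apply: contraTneq gw => ->; rewrite irrG.
have wB : w \in B by move: (RS _ wR); rewrite inE => /andP [].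
have c : connect (induced G (B :\ w')) w b.
  apply: twoB; rewrite !inE ?ww' ?wB ?bB //= andbT.
  by apply: contraNneq bR => ->.
have [pq lq uq aq] := gq.
have bq : b \in a :: q by rewrite -lq mem_last.
set K := [set z in R | z \notin a :: q].
have wK : w \in K by rewrite inE wR /= inE wq orbF; apply: contraNneq aR => <-.
have bK : b \notin K by rewrite inE (negbTE bR).
have [u [h [uK hK uh cwu]]] := exitP c wK bK.
have uR : u \in R by move: uK; rewrite inE => /andP [].
move: uh; rewrite /induced /= !inE => /andP [/andP [uw' uB] /andP [/andP [hw' hB] guh]].
have haq : h \in a :: q.
  apply/negPn/negP => hq; move: hK; rewrite inE hq andbT; apply/negP/negPn.
  apply: (clR u) => //; rewrite !inE hB andbT negb_or; apply/andP; split.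
    by apply: contraNneq hq => ->; rewrite inE eqxx.
  by apply: contraNneq hq => ->.
have cwu' : connect (induced G K) w u by apply: conn_mono cwu => x y /relK_ind.
case/connectP: cwu' => p pth ul.
move: ul; case: (shortenP pth) => p' pth' up' _ lp'.
have pG : path G w p' := path_G pth'.
have Hs : forall z, z \in w :: p' -> (z \in R) && (z \notin a :: q).
  move=> z; rewrite inE => /orP [/eqP ->|zp]; first by move: wK; rewrite inE.
  by move/allP: (path_in pth') => /(_ z zp); rewrite inE.
have ghl : G (last w p') h by rewrite -lp'.
clear pth cwu pth' wK bK hK uK p; clear K.
case/splitPr: w'q gq pq lq uq aq bq haq Hs => q1 q2 gq pq lq uq aq bq haq Hs.
have : (h \in q2) || (h \in a :: q1).
  by move: haq; rewrite !(inE, mem_cat) (negbTE hw'); move=> H; orsolve.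
case/orP => hq.
  exact: step_after gq (erefl _) hq gw pG ghl up' Hs.
have gr := good_rev ab gq.
have [r1 Er] : exists r1, rev (belast a (q1 ++ w' :: q2)) = r1 ++ w' :: rev (a :: q1).
  have E := revQ a (q1 ++ w' :: q2); rewrite lq in E.
  move: E lq; case/lastP: q2 {gq gr pq uq aq bq haq Hs hq} => [|q2 z].
    by rewrite last_cat /= => _ ew; move: w'R; rewrite ew (negbTE bR).
  rewrite last_cat /= last_rcons => E ez; subst z.
  exists (rev q2); move: E; rewrite -cat_cons rev_cat rev_cons rev_rcons /= cat_rcons.
  by case.
have Hs' : forall z, z \in w :: p' -> (z \in R) && (z \notin b :: rev (belast a (q1 ++ w' :: q2))).
  move=> z /Hs; rewrite -{1}lq revQ_mem; exact: id.
have hr : h \in rev (a :: q1) by rewrite mem_rev.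
have [q'' [gq'' wq'']] := step_after gr Er hr gw pG ghl up' Hs'.
exists (rev (belast b q'')); split; first by apply: good_rev gq''; rewrite eq_sym.
have [_ lq'' _ _] := gq''.
have : w \in last b q'' :: rev (belast b q'') by rewrite revQ_mem inE wq'' orbT.
rewrite lq'' inE => /orP [/eqP ewa|//]; by move: aR; rewrite -ewa wR.
Qed.


Lemma fan (R : {set V}) (a b r0 : V) :
  a != b -> a \in B -> b \in B -> R \subset B :\: [set a; b] ->
  (forall u v, u \in R -> v \in B :\: [set a; b] -> G u v -> v \in R) ->
  (forall u v, u \in R -> v \in R -> connect (induced G R) u v) ->
  r0 \in R -> G a r0 ->
  forall z, z \in R -> exists q, goodQ R a b q /\ z \in q.
Proof.
move=> ab aB bB RS0 clR cR r0R ar0 z zR.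
have /subsetP RS := RS0.
have aR : a \notin R by apply/negP => /RS; rewrite !inE eqxx.
have bR : b \notin R by apply/negP => /RS; rewrite !inE eqxx orbT.
have base : exists q, goodQ R a b q /\ r0 \in q.
  have r0B : r0 \in B by move: (RS _ r0R); rewrite inE => /andP [].
  have c : connect (induced G (B :\ a)) r0 b.
    have r0a : r0 != a by apply: contraNneq aR => <-.
    by apply: twoB; rewrite !inE ?r0B ?bB ?andbT ?r0a // eq_sym ab.
  have [u [v [uR vR uv cu]]] := exitP c r0R bR.
  move: uv; rewrite /induced /= !inE => /andP [/andP [ua uB] /andP [/andP [va vB] guv]].
  have vb : v = b.
    apply/eqP; apply/negPn/negP => vb; move: vR; apply/negP/negPn.
    by apply: (clR u) => //; rewrite !inE negb_or va vb vB.
  subst v.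
  have c2 : connect (induced G (b |: R)) r0 b.
    apply: connect_trans (conn_sub (subsetUr _ _) (conn_mono (@relK_ind _ _ _ _) cu)) _.
    by apply: connect1; rewrite /induced /= !inE eqxx uR guv orbT.
  case/connectP: c2 => p pth lp.
  move: lp; case: (shortenP pth) => p' pth' up' _ lp'.
  exists (r0 :: p'); split; last by rewrite inE eqxx.
  split => //=.
  - by rewrite ar0 (path_G pth').
  - have := path_in pth'; move/allP => Hp.
    apply/andP; split; last exact: up'.
    rewrite inE negb_or; apply/andP; split.
      by apply/eqP => e; move: aR; rewrite e r0R.
    apply/negP => /Hp; rewrite !inE (negbTE aR) orbF; exact/negP.
  - rewrite r0R /=; apply/allP => x /(allP (path_in pth')); rewrite !inE.
    by case/orP => ->; rewrite ?orbT.
have c : connect (induced G R) r0 z by apply: cR.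
apply: (conn_ind (P := fun v => exists q, goodQ R a b q /\ v \in q) c base).
move=> u v; rewrite /induced /= => /andP [uR /andP [vR guv]] [q [gq uq]].
exact: step_full ab aB bB RS0 clR gq uq uR vR guv.
Qed.

End Fan.


Lemma disjP (T : finType) (s1 s2 : seq T) :
  (forall z, z \in s1 -> z \in s2 -> False) -> [disjoint s1 & s2].
Proof.
move=> H; rewrite disjoint_has; apply/hasPn => z z1; apply/negP => z2; exact: H z z1 z2.
Qed.

Section Extract.
Variable V : finType.
Variable G : rel V.
Hypothesis symG : symmetric G.

Variables (R : {set V}) (a b t : V) (q1 q2 : seq V).
Hypothesis gq : goodQ G R a b (q1 ++ t :: q2).
Hypothesis tR : t \in R.

Lemma lq2 : last t q2 = b.
Proof. by have [_ lq _ _] := gq; rewrite last_cat in lq. Qed.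

Lemma uq_all : uniq (a :: q1 ++ t :: q2).
Proof. by have [_ _ uq _] := gq. Qed.

Lemma ut2 : uniq (t :: q2).
Proof.
apply: subseq_uniq uq_all; rewrite -cat_cons; exact: suffix_subseq.
Qed.

Lemma extractA :
  [/\ path G a (rcons q1 t), uniq (a :: rcons q1 t), last a (rcons q1 t) = t &
      all (fun z => z \in R) (rcons q1 t)].
Proof.
have [pq lq uq aq] := gq; split.
- by move: pq; rewrite cat_path rcons_path /= => /and3P [-> -> _].
- apply: subseq_uniq uq; rewrite -cats1 -cat_cons.
  have -> : a :: q1 ++ t :: q2 = (a :: q1 ++ [:: t]) ++ q2 by rewrite /= -catA.
  exact: prefix_subseq.
- exact: last_rcons.
- apply/allP => z; rewrite mem_rcons inE => /orP [/eqP -> //|zq1].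
  move/allP: aq => /(_ z); rewrite mem_cat zq1 => /(_ isT) /orP [//|/eqP zb].
  move: uq; rewrite cons_uniq cat_uniq => /andP [_ /and3P [_ /hasPn H _]].
  have : z \in t :: q2 by rewrite zb -lq2 mem_last.
  by move/H; rewrite zq1.
Qed.

Lemma extractB :
  [/\ path G b (rev (belast t q2)), uniq (b :: rev (belast t q2)),
      last b (rev (belast t q2)) = t &
      all (fun z => z \in R) (rev (belast t q2))].
Proof.
have [pq lq uq aq] := gq; split.
- rewrite -lq2 rev_path; rewrite (@eq_path _ _ G); last by move=> x y /=; exact: symG.
  by move: pq; rewrite cat_path /= => /and3P [_ _ ->].
- by rewrite -lq2 revQ rev_uniq ut2.
- by rewrite -[last b _](last_cons t) -{1}lq2 revQ /= rev_cons last_rcons.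
- apply/allP => z; rewrite mem_rev => zb.
  have := mem_belast zb; rewrite inE => /orP [/eqP -> //|zq].
  move/allP: aq => /(_ z); rewrite mem_cat inE zq !orbT => /(_ isT) /orP [//|/eqP zeb].
  move: ut2; rewrite lastI rcons_uniq => /andP [nb _].
  by move: nb; rewrite lq2 -zeb zb.
Qed.

Lemma disjAB : [disjoint inner a (rcons q1 t) & b :: rev (belast t q2)].
Proof.
apply: disjP => z; rewrite /inner belast_rcons /= -lq2 revQ_mem => z1 z2.
move: uq_all; rewrite cons_uniq cat_uniq => /andP [_ /and3P [_ /hasPn H _]].
by move: (H z z2); rewrite z1.
Qed.

Lemma disjBA : [disjoint inner b (rev (belast t q2)) & a :: rcons q1 t].
Proof.
have [_ ub lb _] := extractB.
apply: disjP => z z1 z2.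
have zl : z != t by rewrite -lb; apply: inner_last z1; move: ub => /andP [].
have := inner_sub z1; rewrite mem_rev => /mem_belast; rewrite inE (negbTE zl) /= => zq2.
move: uq_all z2; rewrite cons_uniq cat_uniq inE mem_rcons inE => /andP [na /and3P [_ /hasPn H _]].
case/orP => [/eqP eza|/orP [/eqP ezt|zq1]].
- by move: na; rewrite -eza mem_cat inE zq2 !orbT.
- by move: zl; rewrite ezt eqxx.
- by move: (H z); rewrite inE zq2 orbT zq1 => /(_ isT).
Qed.

End Extract.

Lemma split_index (T : eqType) (t : T) q : t \in q ->
  q = take (index t q) q ++ t :: drop (index t q).+1 q.
Proof.
move=> tq; rewrite -{1}(cat_take_drop (index t q) q); congr (_ ++ _).
by rewrite (drop_nth t) ?index_mem // nth_index.
Qed.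


Section Pieces.
Variable V : finType.
Variable G : rel V.
Hypothesis symG : symmetric G.
Hypothesis irrG : irreflexive G.
Variable B : {set V}.
Hypothesis twoB : forall v, connected_on G (B :\ v).

Lemma vsetP (E : seq {set V}) z : reflect (exists2 e, e \in E & z \in e) (z \in vset E).
Proof.
elim: E => [|e E IH]; rewrite /vset ?big_nil ?big_cons.
  by rewrite in_set0; constructor; case.
rewrite in_setU; apply: (iffP orP) => [[ze|/IH [e' e'E ze']]|[e' ]].
- by exists e; rewrite ?inE ?eqxx.
- by exists e'; rewrite ?inE ?e'E ?orbT.
- rewrite inE => /orP [/eqP -> ->|e'E ze']; first by left.
  by right; apply/IH; exists e'.
Qed.

Lemma mem_vset (E : seq {set V}) e z : e \in E -> z \in e -> z \in vset E.
Proof. by move=> eE ze; apply/vsetP; exists e. Qed.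

Lemma vset_cat (E1 E2 : seq {set V}) : vset (E1 ++ E2) = vset E1 :|: vset E2.
Proof. by rewrite /vset big_cat. Qed.

Lemma vset_cons (e : {set V}) E : vset (e :: E) = e :|: vset E.
Proof. by rewrite /vset big_cons. Qed.

Lemma vset_perm (E E' : seq {set V}) : perm_eq E E' -> vset E = vset E'.
Proof. by move=> pE; rewrite /vset (perm_big _ pE). Qed.

Lemma set2_sub (a b x y : V) : x \in [set a; b] -> y \in [set a; b] -> x != y ->
  [set x; y] = [set a; b].
Proof.
rewrite !inE => /orP [/eqP->|/eqP->] /orP [/eqP->|/eqP->]; rewrite ?eqxx // => _.
exact: setUC.
Qed.

Definition plink (P : seq {set V}) (v : V) : rel V :=
  [rel x y | [&& x != v, y != v, x != y & [set x; y] \in P]].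

Definition Inv (P : seq {set V}) :=
  [/\ vset P \subset B,
      forall e, e \in P -> exists c d, c != d /\ e = [set c; d],
      forall c d, [set c; d] \in P -> c != d ->
        connect (induced G ((B :\: vset P) :|: [set c; d])) c d &
      forall v u w, u \in vset P -> w \in vset P -> u != v -> w != v ->
        connect (plink P v) u w].

Lemma links_mem x y : ([set x; y] \in links_of G B) = [&& x \in B, y \in B &
   [exists u, exists v, ([set x; y] == [set u; v]) && G u v]].
Proof. by rewrite /links_of mem_enum inE subUset !sub1set andbA. Qed.

Lemma inv_init : Inv (links_of G B).
Proof.
have vB : vset (links_of G B) \subset B.
  apply/subsetP => z /vsetP [e]; rewrite /links_of mem_enum inE => /andP [/subsetP H _].
  exact: H.
split => //.
- move=> e; rewrite /links_of mem_enum inE => /andP [_ /existsP [u /existsP [v /andP [/eqP -> g]]]].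
  by exists u, v; split => //; apply: contraTneq g => ->; rewrite irrG.
- move=> c d; rewrite links_mem => /and3P [cB dB /existsP [u /existsP [v /andP [/eqP E g]]]] cd.
  apply: connect1; rewrite /induced /= !inE !eqxx !orbT /=.
  by case: (set2_eq E) => [[-> ->]|[-> ->]] //; rewrite symG.
- move=> v u w uP wP uv wv.
  have c : connect (induced G (B :\ v)) u w.
    by apply: twoB; rewrite !inE ?uv ?wv /=; apply: (subsetP vB).
  apply: conn_mono c => x y; rewrite /induced /= !inE => /andP [/andP [xv xB] /andP [/andP [yv yB] g]].
  rewrite /plink /= xv yv links_mem xB yB /=; apply/andP; split.
    by apply: contraTneq g => ->; rewrite irrG.
  by apply/existsP; exists x; apply/existsP; exists y; rewrite eqxx g.
Qed.


Lemma inv_split P E1 E2 a b : Inv P -> a != b -> perm_eq P (E1 ++ E2) ->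
  vset E1 :&: vset E2 = [set a; b] -> Inv ([set a; b] :: E1).
Proof.
move=> [I0 Iw I1 I2] ab pP iE.
have hP e : (e \in P) = (e \in E1) || (e \in E2) by rewrite (perm_mem pP) mem_cat.
have vP : vset P = vset E1 :|: vset E2 by rewrite (vset_perm pP) vset_cat.
have key z : z \in vset E1 -> z \in vset E2 -> z \in [set a; b].
  by move=> z1 z2; rewrite -iE inE z1 z2.
have aE1 : a \in vset E1 by move: (set21 a b); rewrite -iE inE => /andP [].
have bE1 : b \in vset E1 by move: (set22 a b); rewrite -iE inE => /andP [].
have aE2 : a \in vset E2 by move: (set21 a b); rewrite -iE inE => /andP [].
have bE2 : b \in vset E2 by move: (set22 a b); rewrite -iE inE => /andP [].
have v1 : vset ([set a; b] :: E1) = [set a; b] :|: vset E1 by rewrite vset_cons.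
have sub1 : vset ([set a; b] :: E1) \subset vset P.
  rewrite v1 vP; apply/subsetP => z; rewrite !inE -!orbA => /or3P [/eqP ->|/eqP ->|->] //.
  - by rewrite aE1.
  - by rewrite bE1.
have E1P e : e \in E1 -> e \in P by rewrite hP => ->.
have E2P e : e \in E2 -> e \in P by rewrite hP => ->; rewrite orbT.
have notin1 z : z \in vset E2 -> z \notin [set a; b] -> z \notin vset ([set a; b] :: E1).
  move=> z2 zab; rewrite v1 in_setU negb_or zab /=; apply/negP => z1.
  by move: zab; rewrite (key z z1 z2).
split.
- exact: subset_trans sub1 I0.
- move=> e; rewrite inE => /orP [/eqP ->|/E1P /Iw //]; by exists a, b.
-
  set P1 := [set a; b] :: E1.
  have cab : connect (induced G ((B :\: vset P1) :|: [set a; b])) a b.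
    pose E2rel : rel V := fun x y => (x != y) && ([set x; y] \in E2).
    have E2sym : symmetric E2rel by move=> x y; rewrite /E2rel eq_sym setUC.
    have c1 : connect E2rel b a.
      have [e eE2 be] := vsetP _ _ bE2.
      have [c [d [cd ecd]]] := Iw e (E2P e eE2).
      have [d' [bd' ed']] : exists d', b != d' /\ [set b; d'] \in E2.
        move: be; rewrite ecd !inE => /orP [/eqP ->|/eqP ->].
          by exists d; rewrite -ecd.
        by exists c; rewrite eq_sym cd setUC -ecd.
      case: (eqVneq d' a) => [da|da].
        by apply: connect1; rewrite /E2rel -da bd' ed'.
      have d'E2 : d' \in vset E2 by apply: (mem_vset ed'); rewrite !inE eqxx orbT.
      have d'ab : d' \notin [set a; b] by rewrite !inE negb_or da eq_sym bd'.
      have cP : connect (plink P b) d' a.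
        apply: I2; rewrite ?vP ?inE ?d'E2 ?aE1 ?orbT //; by rewrite eq_sym.
      pose K := [set z | (z \in vset E2) && (z \notin [set a; b])].
      have d'K : d' \in K by rewrite inE d'E2 d'ab.
      have aK : a \notin K by rewrite inE set21 andbF.
      have inE2 x y : x \in K -> [set x; y] \in P -> [set x; y] \in E2.
        rewrite inE => /andP [x2 xab]; rewrite hP => /orP [xy1|//].
        have x1 : x \in vset E1 by apply: (mem_vset xy1); rewrite !inE eqxx.
        by move: xab; rewrite (key x x1 x2).
      have [u [v' [uK v'K uv' cu]]] := exitP cP d'K aK.
      move: uv'; rewrite /plink /= => /and4P [_ v'b uv' uv'P].
      have uv'E2 := inE2 _ _ uK uv'P.
      have v'a : v' = a.
        have v'2 : v' \in vset E2 by apply: (mem_vset uv'E2); rewrite !inE eqxx orbT.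
        move: v'K; rewrite inE v'2 /= negbK !inE => /orP [/eqP //|/eqP eb].
        by move: v'b; rewrite eb eqxx.
      subst v'.
      have bd'E : E2rel b d' by rewrite /E2rel bd' ed'.
      have d'u : connect E2rel d' u.
        apply: conn_mono cu => x y; rewrite /= => /andP [/andP [xK yK] /and4P [_ _ xy xyP]].
        by rewrite /E2rel xy (inE2 _ _ xK xyP).
      have ua : E2rel u a by rewrite /E2rel uv' uv'E2.
      exact: connect_trans (connect_trans (connect1 bd'E) d'u) (connect1 ua).
    have c2 : connect E2rel a b by rewrite (sym_connect_sym E2sym).
    apply: connect_sub c2 => x y /andP [xy xyE2].
    have := I1 x y (E2P _ xyE2) xy; apply: conn_sub.
    apply/subsetP => z; rewrite !inE => /or3P [/andP [zP zB]|/eqP ez|/eqP ez].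
    + rewrite zB andbT; apply/orP; left; apply: contra zP; exact: (subsetP sub1).
    + subst z.
      have x2 : x \in vset E2 by apply: (mem_vset xyE2); rewrite !inE eqxx.
      case: (boolP (x \in [set a; b])) => [|xab].
        by rewrite !inE => /orP [->|->]; rewrite !orbT.
      have nx : x \notin vset P1 := notin1 _ x2 xab.
      by rewrite nx /= (subsetP I0) // vP inE x2 orbT.
    + subst z.
      have x2 : y \in vset E2 by apply: (mem_vset xyE2); rewrite !inE eqxx orbT.
      case: (boolP (y \in [set a; b])) => [|xab].
        by rewrite !inE => /orP [->|->]; rewrite !orbT.
      have nx : y \notin vset P1 := notin1 _ x2 xab.
      by rewrite nx /= (subsetP I0) // vP inE x2 orbT.
  move=> c d; rewrite inE => /orP [/eqP E|cd1] cdn.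
    rewrite E; case: (set2_eq E) => [[-> ->]|[-> ->]] //.
    by rewrite (conn_sym symG).
  have := I1 c d (E1P _ cd1) cdn; apply: conn_sub.
  by apply: setSU; apply: setDS.
-
  move=> v u w uP1 wP1 uv wv.
  have cP : connect (plink P v) u w by apply: I2 => //; apply: (subsetP sub1).
  pose c := if v == a then b else a.
  have cab : c \in [set a; b] by rewrite /c; case: (v == a); rewrite !inE eqxx ?orbT.
  have cv : c != v.
    by rewrite /c; case: (eqVneq v a) => [->|va]; rewrite ?eqxx ?(negbTE va) eq_sym ?ab ?va.
  pose f z := if (z \in vset E2) && (z \notin [set a; b]) then c else z.
  have fid z : z \in vset ([set a; b] :: E1) -> f z = z.
    move=> zP1; rewrite /f; case: ifP => // /andP [z2 zab].
    by move: zP1; rewrite (negbTE (notin1 _ z2 zab)).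
  rewrite -(fid _ uP1) -(fid _ wP1).
  apply: (conn_map (f := f) cP) => x y /and4P [xv yv xy xyP].
  move: xyP; rewrite hP => /orP [xy1|xy2].
    have x1 : x \in vset E1 by apply: (mem_vset xy1); rewrite !inE eqxx.
    have y1 : y \in vset E1 by apply: (mem_vset xy1); rewrite !inE eqxx orbT.
    rewrite !fid ?v1 ?inE ?x1 ?y1 ?orbT //; right.
    by rewrite /plink /= xv yv xy inE xy1 orbT.
  have x2 : x \in vset E2 by apply: (mem_vset xy2); rewrite !inE eqxx.
  have y2 : y \in vset E2 by apply: (mem_vset xy2); rewrite !inE eqxx orbT.
  have fab z : z \in vset E2 -> z != v -> (f z \in [set a; b]) && (f z != v).
    by move=> z2 zv; rewrite /f z2 /=; case: ifP => [_|/negbFE ->]; rewrite ?cab ?cv ?zv.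
  case/andP: (fab x x2 xv) => fx fxv; case/andP: (fab y y2 yv) => fy fyv.
  case: (eqVneq (f x) (f y)) => [->|fxy]; first by left.
  right; rewrite /plink /= fxv fyv fxy (set2_sub fx fy fxy) inE eqxx //.
Qed.


Lemma inv_pieces Ps0 : split_pieces G B Ps0 -> forall P, P \in Ps0 -> Inv P.
Proof.
elim => [|Ps P a b P1 P2 _ IH PPs [ab [E1 [E2 [pP _ _ iE [-> ->]]]]]] Q.
- rewrite inE => /eqP ->; exact: inv_init.
- rewrite !inE => /orP [/eqP ->|/orP [/eqP ->|QR]].
  + exact: inv_split (IH _ PPs) ab pP iE.
  + apply: inv_split (IH _ PPs) ab _ _.
      exact: perm_trans pP (permEl (perm_catC E1 E2)).
    by rewrite setIC.
  + apply: IH; exact: mem_rem QR.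
Qed.

Lemma exit_link P a b x y : Inv P -> a != b -> a \in vset P -> b \in vset P ->
  x \in vset P -> y \in vset P -> x \notin [set a; b] -> y \notin [set a; b] ->
  ~~ connect (induced G (B :\: [set a; b])) x y ->
  exists u, connect (induced G (B :\: [set a; b])) x u /\ [set u; a] \in P.
Proof.
move=> [I0 Iw I1 I2] ab aP bP xP yP xab yab nc.
set S := B :\: [set a; b].
have xb : x != b by apply: contraNneq xab => ->; rewrite set22.
have yb : y != b by apply: contraNneq yab => ->; rewrite set22.
have cP : connect (plink P b) x y by apply: I2.
pose K := [set z | connect (induced G S) x z].
have xK : x \in K by rewrite inE connect0.
have yK : y \notin K by rewrite inE.
have [u [v [uK vK uv cu]]] := exitP cP xK yK.
move: uv; rewrite /plink /= => /and4P [_ vb uv uvP].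
exists u; split; first by move: uK; rewrite inE.
case: (eqVneq v a) => [eva|va]; first by rewrite -eva.
have xS : x \in S by rewrite inE xab (subsetP I0).
have uS : u \in S.
  move: uK; rewrite inE => /conn_end [<- //|[]] //.
have vS : v \in S.
  by rewrite !inE negb_or va vb (subsetP I0) // (mem_vset uvP) // !inE eqxx orbT.
have := I1 u v uvP uv.
move/(conn_sub (S2 := S)) => H.
have cuv : connect (induced G S) u v.
  apply: H; apply/subsetP => z; rewrite !inE => /or3P [/andP [zP zB]|/eqP ->|/eqP ->].
  - rewrite zB andbT negb_or; apply/andP; split; apply: contra zP => /eqP ->; by [].
  - by move: uS; rewrite !inE.
  - by move: vS; rewrite !inE.
have cxu : connect (induced G S) x u by move: uK; rewrite inE.
by move: vK; rewrite inE (connect_trans cxu cuv).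
Qed.


Lemma tri_conn Ps P a b x y : fully_split Ps -> P \in Ps -> Inv P -> a != b ->
  a \in vset P -> b \in vset P -> x \in vset P -> y \in vset P ->
  x \notin [set a; b] -> y \notin [set a; b] ->
  connect (induced G (B :\: [set a; b])) x y.
Proof.
move=> fs PPs IP ab aP bP xP yP xab yab.
apply/negPn/negP => nc.
have IP' := IP; case: IP' => [I0 Iw I1 I2].
set S := B :\: [set a; b].
have ba : b != a by rewrite eq_sym.
have Sba : B :\: [set b; a] = S by rewrite /S setUC.
have ncyx : ~~ connect (induced G S) y x by rewrite (conn_sym symG).
have xba : x \notin [set b; a] by rewrite setUC.
have yba : y \notin [set b; a] by rewrite setUC.
have [u1 [c1 L1]] := exit_link IP ab aP bP xP yP xab yab nc.
have [u2 [c2 L2]] : exists u, connect (induced G S) x u /\ [set u; b] \in P.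
  by rewrite -Sba; apply: exit_link IP ba bP aP xP yP xba yba _; rewrite Sba.
have [u3 [c3 L3]] := exit_link IP ab aP bP yP xP yab xab ncyx.
have [u4 [c4 L4]] : exists u, connect (induced G S) y u /\ [set u; b] \in P.
  by rewrite -Sba; apply: exit_link IP ba bP aP yP xP yba xba _; rewrite Sba.
pose C := [set z | connect (induced G S) x z].
have xS : x \in S by rewrite inE xab (subsetP I0).
have CS z : z \in C -> z \in S.
  by rewrite inE => /conn_end [<- //|[]].
have aS : a \notin S by rewrite in_setD set21.
have bS : b \notin S by rewrite in_setD set22.
have yC z : connect (induced G S) y z -> z \notin C.
  move=> cyz; apply/negP; rewrite inE => cxz; move/negP: nc; apply.
  by apply: connect_trans cxz _; rewrite (conn_sym symG).
have claim c d : [set c; d] \in P -> c \in C -> (d \in C) || (d \in [set a; b]).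
  move=> cdP cC; case: (boolP (d \in [set a; b])) => [dab|dab]; first by apply/orP; right.
  case: (eqVneq c d) => [<-|cd]; first by rewrite cC.
  have dS : d \in S by rewrite inE dab (subsetP I0) // (mem_vset cdP) // !inE eqxx orbT.
  have := I1 c d cdP cd; move/(conn_sub (S2 := S)) => H.
  have ccd : connect (induced G S) c d.
    apply: H; apply/subsetP => z; rewrite !inE => /or3P [/andP [zP zB]|/eqP ->|/eqP ->].
    - rewrite zB andbT negb_or; apply/andP; split; apply: contra zP => /eqP ->; by [].
    - by move: (CS c cC); rewrite !inE.
    - by move: dS; rewrite !inE.
  by move: cC; rewrite !inE => cxc; rewrite (connect_trans cxc ccd).
pose meets (e : {set V}) := [exists z, (z \in e) && (z \in C)].
pose E1 := filter meets P; pose E2 := filter (predC meets) P.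
have L1E : [set u1; a] \in E1.
  rewrite mem_filter L1 andbT; apply/existsP; exists u1; by rewrite set21 inE c1.
have L2E : [set u2; b] \in E1.
  rewrite mem_filter L2 andbT; apply/existsP; exists u2; by rewrite set21 inE c2.
have nm u z : connect (induced G S) y u -> z \in [set u; a] :|: [set u; b] -> z \notin C.
  move=> cyu zin; have : [|| z == u, z == a, z == u | z == b] by move: zin; rewrite !inE -!orbA.
  case/or4P => /eqP ->.
  - exact: yC.
  - by apply: contra aS; apply: CS.
  - exact: yC.
  - by apply: contra bS; apply: CS.
have L3E : [set u3; a] \in E2.
  rewrite mem_filter L3 andbT /=; apply/existsPn => z; apply/negP => /andP [zin zC].
  by move: (nm u3 z c3); rewrite inE zin zC => /(_ isT).
have L4E : [set u4; b] \in E2.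
  rewrite mem_filter L4 andbT /=; apply/existsPn => z; apply/negP => /andP [zin zC].
  by move: (nm u4 z c4); rewrite inE zin orbT zC => /(_ isT).
have neq u u' : u \in S -> [set u; a] != [set u'; b].
  move=> uS; apply/negP => /eqP E; have : b \in [set u; a] by rewrite E set22.
  rewrite !inE (eq_sym b a) (negbTE ab) orbF => /eqP ebu; by move: uS; rewrite -ebu (negbTE bS).
apply: (fs P a b ([set a; b] :: E1) ([set a; b] :: E2) PPs).
split => //; exists E1, E2; split => //.
- by rewrite perm_sym; exact: (permEl (perm_filterC meets P)).
- apply: (two_in_size L1E L2E); apply: neq; apply: CS; by rewrite inE.
- apply: (two_in_size L3E L4E); apply: neq.
  have yS : y \in S by rewrite inE yab (subsetP I0).
  by move: c3; rewrite (conn_sym symG) => /conn_end [e3|[]//]; rewrite e3.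
- apply/setP => z; rewrite inE; apply/idP/idP.
  + case/andP => /vsetP [e eE1 ze] /vsetP [e' eE2 ze'].
    move: eE1; rewrite mem_filter => /andP [/existsP [z0 /andP [z0e z0C]] eP].
    move: eE2; rewrite mem_filter => /andP [nme e'P].
    have zC : z \notin C.
      apply/negP => zC; move/negP: nme; apply; apply/existsP; exists z; by rewrite ze' zC.
    case: (eqVneq z0 z) => [ez|z0z]; first by move: zC; rewrite -ez z0C.
    have [c [d [cd ecd]]] := Iw e eP.
    have E : [set z0; z] = e by rewrite ecd; apply: set2_sub; rewrite -?ecd.
    by move: (claim z0 z); rewrite E eP z0C (negbTE zC) => /(_ isT isT).
  + rewrite !inE => /orP [/eqP ->|/eqP ->]; apply/andP; split; apply/vsetP.
    * by exists [set u1; a] => //; rewrite set22.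
    * by exists [set u3; a] => //; rewrite set22.
    * by exists [set u2; b] => //; rewrite set22.
    * by exists [set u4; b] => //; rewrite set22.
Qed.

End Pieces.


Section Main.
Variable V : finType.
Variable G : rel V.
Hypothesis symG : symmetric G.
Hypothesis irrG : irreflexive G.
Variables (M B T : {set V}) (Ps : seq (seq {set V})) (P0 : seq {set V}).
Hypothesis twoB : forall v, connected_on G (B :\ v).
Hypothesis spl : split_pieces G B Ps.
Hypothesis fs : fully_split Ps.
Hypothesis P0Ps : P0 \in Ps.
Hypothesis ET : T = vset P0.

Definition sepT a b w := [/\ a \in T, b \in T & separates G M B T a b w].
Definition region a b w := gcomp G (B :\: [set a; b]) w.

Lemma IP0 : Inv G B P0.
Proof. exact: (@inv_pieces _ _ symG irrG _ twoB _ spl P0 P0Ps). Qed.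

Lemma TB : T \subset B.
Proof. by case: IP0; rewrite ET. Qed.

Lemma sepT_sym a b w : sepT a b w -> sepT b a w.
Proof.
have E : [set b; a] = [set a; b] by rewrite setUC.
case=> aT bT [[ab aB bB [u [w' [uS wS nc]]]] ag wab [x [xT nx]]].
split => //; split => //.
- split => //; first by rewrite eq_sym.
  by exists u, w'; rewrite E.
- by rewrite E.
- by exists x; rewrite E.
Qed.

Lemma region_sym a b w : region a b w = region b a w.
Proof. by rewrite /region setUC. Qed.

Lemma reg_sub a b w : region a b w \subset B :\: [set a; b].
Proof. exact: comp_sub. Qed.

Lemma reg_noT a b w z : sepT a b w -> z \in region a b w -> z \notin T.
Proof.
case=> aT bT [[ab aB bB _] ag wab [x [xT nx]]] zR; apply/negP => zT.
have zS : z \in B :\: [set a; b] := subsetP (reg_sub a b w) z zR.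
have xab : x \notin [set a; b] by move: xT; rewrite inE => /andP [].
have zab : z \notin [set a; b] by move: zS; rewrite inE => /andP [].
have xP : x \in vset P0 by move: xT; rewrite inE ET => /andP [].
rewrite ET in aT bT zT.
have cxz := tri_conn symG fs P0Ps IP0 ab aT bT xP zT xab zab.
move: zR; rewrite inE => /andP [_ cwz].
by move/negP: nx; apply; apply: connect_trans cwz _; rewrite (conn_sym symG).
Qed.

Lemma reg_w a b w : sepT a b w -> w \in region a b w.
Proof.
case=> _ _ [_ [wB _] wab _].
by rewrite inE connect0 inE wab wB.
Qed.

Lemma reg_closed a b w u v : u \in region a b w -> v \in B :\: [set a; b] -> G u v ->
  v \in region a b w.
Proof. exact: comp_closed. Qed.

Lemma reg_conn a b w u v : u \in region a b w -> v \in region a b w ->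
  connect (induced G (region a b w)) u v.
Proof.
move=> /comp_conn cu /comp_conn cv.
by apply: connect_trans cv; rewrite (conn_sym symG).
Qed.

Lemma reg_adj a b w : sepT a b w -> exists2 r0, r0 \in region a b w & G a r0.
Proof.
move=> sp; have wR := reg_w sp.
case: sp => aT bT [[ab aB bB _] [wB _] wab [x [xT nx]]].
have xab : x \notin [set a; b] by move: xT; rewrite inE => /andP [].
have xB : x \in B by move: xT; rewrite inE => /andP [_ /(subsetP TB)].
have c : connect (induced G (B :\ b)) w x.
  apply: twoB; rewrite !inE ?wB ?xB andbT.
  - by move: wab; rewrite !inE negb_or => /andP [].
  - by move: xab; rewrite !inE negb_or => /andP [].
have xR : x \notin region a b w by rewrite inE negb_and nx orbT.
have [u [v [uR vR uv _]]] := exitP c wR xR.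
move: uv; rewrite /induced /= !inE => /andP [_ /andP [/andP [vb vB] guv]].
exists u => //; rewrite symG.
case: (eqVneq v a) => [<- //|va].
by move: vR; rewrite (reg_closed uR) // !inE negb_or va vb vB.
Qed.

Lemma reg_good a b w : sepT a b w ->
  exists q, goodQ G (region a b w) a b q /\ w \in q.
Proof.
move=> sp; have wR := reg_w sp; have [r0 r0R ar0] := reg_adj sp.
case: sp => aT bT [[ab aB bB _] _ _ _].
apply: (fan symG irrG twoB ab aB bB (reg_sub a b w) _ _ r0R ar0 wR).
- by move=> u v; apply: reg_closed.
- by move=> u v; apply: reg_conn.
Qed.

Lemma reg_attach a b w a' b' w' : sepT a b w -> sepT a' b' w' ->
  region a b w = region a' b' w' -> a \in [set a'; b'].
Proof.
move=> sp sp' E; have [r0 r0R ar0] := reg_adj sp.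
have aT : a \in T by case: sp.
have aB : a \in B by case: sp => _ _ [[]].
apply/negPn/negP => aab.
have : a \in region a' b' w'.
  apply: (reg_closed (u := r0)); first by rewrite -E.
    by rewrite inE aab aB.
  by rewrite symG.
by move/(reg_noT sp'); rewrite aT.
Qed.

Lemma reg_disj a b w a' b' w' z : sepT a b w -> sepT a' b' w' ->
  region a b w != region a' b' w' -> z \in region a b w -> z \notin region a' b' w'.
Proof.
have H : forall a b w a' b' w', sepT a b w -> sepT a' b' w' -> z \in region a b w ->
    z \in region a' b' w' -> region a b w \subset region a' b' w'.
  move=> a1 b1 w1 a2 b2 w2 sp1 sp2 z1 z2; apply/subsetP => r r1.
  have c := reg_conn z1 r1.
  have sub : region a1 b1 w1 \subset B :\: [set a2; b2].
    apply/subsetP => y y1; rewrite inE.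
    have yB : y \in B by move: (subsetP (reg_sub a1 b1 w1) y y1); rewrite inE => /andP [].
    rewrite yB andbT; apply/negP; rewrite !inE => /orP [/eqP e|/eqP e].
    - by move: (reg_noT sp1 y1); rewrite e; case: sp2 => ->.
    - by move: (reg_noT sp1 y1); rewrite e; case: sp2 => _ ->.
  have c' := conn_sub sub c.
  move: z2; rewrite inE => /andP [_ c2].
  by rewrite inE (subsetP sub r r1) (connect_trans c2 c').
move=> sp sp' ne zR; apply/negP => zR'; move/negP: ne; apply; apply/eqP.
by apply/eqP; rewrite eqEsubset (H _ _ _ _ _ _ sp sp' zR zR') (H _ _ _ _ _ _ sp' sp zR' zR).
Qed.

End Main.


Lemma choice_fun (A Bt : Type) (R : A -> Bt -> Prop) :
  (forall a, exists b, R a b) -> exists f, forall a, R a (f a).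
Proof.
move=> H; exists (fun a => proj1_sig (constructive_indefinite_description _ (H a))).
move=> a; exact: (proj2_sig (constructive_indefinite_description _ (H a))).
Qed.

Section Ext.
Variable V : finType.
Variable G : rel V.
Hypothesis symG : symmetric G.

Definition PA (q : seq V) t := rcons (take (index t q) q) t.
Definition PB (q : seq V) t := rev (belast t (drop (index t q).+1 q)).
Definition ext (a : V) q t mu := if mu == a then PA q t else PB q t.

Lemma ext_props (R : {set V}) a b q t mu : goodQ G R a b q -> t \in q -> t \in R ->
  mu \in [set a; b] ->
  [/\ path G mu (ext a q t mu), uniq (mu :: ext a q t mu), last mu (ext a q t mu) = t &
      all (fun z => z \in R) (ext a q t mu)].
Proof.
move=> gq tq tR mab; have E := split_index tq; rewrite E in gq.
rewrite /ext /PA /PB; case: eqVneq => [->|ma].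
  exact: extractA gq tR.
have -> : mu = b by move: mab; rewrite !inE (negbTE ma) => /eqP.
exact (extractB symG gq tR).
Qed.

Lemma ext_disj (R : {set V}) a b q t mu nu : goodQ G R a b q -> t \in q -> t \in R ->
  mu \in [set a; b] -> nu \in [set a; b] -> mu != nu ->
  [disjoint inner mu (ext a q t mu) & nu :: ext a q t nu].
Proof.
move=> gq tq tR mab nab mn; have E := split_index tq; rewrite E in gq.
rewrite /ext /PA /PB; case: (eqVneq mu a) => [ema|ma].
  subst mu; rewrite eq_sym (negbTE mn).
  have -> : nu = b by move: nab; rewrite !inE eq_sym (negbTE mn) => /eqP.
  exact: disjAB gq.
have -> : mu = b by move: mab; rewrite !inE (negbTE ma) => /eqP.
have -> : nu = a.
  move: nab mn; rewrite !inE => /orP [/eqP //|/eqP ->].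
  by move: mab; rewrite !inE (negbTE ma) => /eqP ->; rewrite eqxx.
rewrite eqxx; exact (disjBA symG gq tR).
Qed.

End Ext.


Lemma setD1_notin (V : finType) (A : {set V}) v : v \notin A -> A :\ v = A.
Proof.
move=> vA; apply/setP => z; rewrite !inE; case: eqVneq => // ->; by rewrite (negbTE vA).
Qed.

Lemma twoB_of (V : finType) (G : rel V) (B : {set V}) a b :
  biconnected_component G B -> two_cut G B a b -> forall v, connected_on G (B :\ v).
Proof.
move=> [[[_ [cB cBv]]|[u [v [uv EB _]]]] _] [ab aB bB [x [y [xS _ _]]]].
  move=> v; case: (boolP (v \in B)) => vB; first exact: cBv.
  by rewrite setD1_notin.
exfalso; move: aB bB xS; rewrite EB => aB bB.
by rewrite (set2_sub aB bB ab) setDv inE.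
Qed.

Theorem mainTheorem2 (V : finType) (G : rel V) (M B T : {set V}) :
  symmetric G -> irreflexive G ->
  (forall u v, connect G u v) ->
  biconnected_component G B ->
  triconnected_component G B T ->
  exists P : V -> seq V,
    [/\ forall mu, vantage G M B T mu -> external_path G M B T mu (P mu),
        forall mu, vantage G M B T mu -> agent G M B mu -> P mu = [::] &
        forall mu nu, vantage G M B T mu -> vantage G M B T nu -> mu != nu ->
          [disjoint inner mu (P mu) & nu :: P nu]].
Proof.
move=> symG irrG _ Bcomp [Ps [P0 [spl fs P0Ps ET]]].
have twoS a b w : sepT G M B T a b w -> forall v, connected_on G (B :\ v).
  by case=> _ _ [tc _ _ _]; exact: twoB_of Bcomp tc.
have [RF HRF] : exists RF : V -> {set V}, forall mu,
    (exists a b w, sepT G M B T a b w /\ mu \in [set a; b]) ->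
    exists a b w, [/\ sepT G M B T a b w, mu \in [set a; b] & RF mu = region G B a b w].
  apply: (choice_fun (R := fun mu X => (exists a b w, sepT G M B T a b w /\ mu \in [set a; b]) ->
    exists a b w, [/\ sepT G M B T a b w, mu \in [set a; b] & X = region G B a b w])) => mu.
  case: (classic (exists a b w, sepT G M B T a b w /\ mu \in [set a; b])).
    by move=> [a [b [w [sp m]]]]; exists (region G B a b w) => _; exists a, b, w.
  by move=> nH; exists set0 => H; case: nH.
have [FR HFR] : exists FR : {set V} -> option (V * V * seq V * V), forall R,
    (exists a b w, sepT G M B T a b w /\ R = region G B a b w) ->
    exists a b q t, FR R = Some (a, b, q, t) /\
      [/\ exists w, sepT G M B T a b w /\ R = region G B a b w,
          goodQ G R a b q, t \in q, t \in R & agent G M B t].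
  apply: (choice_fun (R := fun R X => (exists a b w, sepT G M B T a b w /\ R = region G B a b w) ->
    exists a b q t, X = Some (a, b, q, t) /\
      [/\ exists w, sepT G M B T a b w /\ R = region G B a b w,
          goodQ G R a b q, t \in q, t \in R & agent G M B t])) => R.
  case: (classic (exists a b w, sepT G M B T a b w /\ R = region G B a b w)); last first.
    by move=> nH; exists None => H; case: nH.
  move=> [a [b [w [sp ER]]]].
  have [q [gq wq]] := reg_good symG irrG (twoS _ _ _ sp) spl P0Ps ET sp.
  exists (Some (a, b, q, w)) => _; exists a, b, q, w; split => //; split.
  - by exists w.
  - by rewrite ER.
  - done.
  - by rewrite ER; exact: reg_w sp.
  - by case: sp => _ _ [].
pose ext0 mu := if FR (RF mu) is Some (a, b, q, t) then ext a q t mu else [::].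
have [P HP] : exists P : V -> seq V, forall mu,
    (agent G M B mu -> P mu = [::]) /\ (~ agent G M B mu -> P mu = ext0 mu).
  apply: (choice_fun (R := fun mu X => (agent G M B mu -> X = [::]) /\ (~ agent G M B mu -> X = ext0 mu))) => mu.
  case: (classic (agent G M B mu)) => ag.
    by exists [::]; split.
  by exists (ext0 mu); split.
have key : forall mu, vantage G M B T mu -> ~ agent G M B mu ->
    exists a b w a' b' q t, [/\ sepT G M B T a b w, RF mu = region G B a b w,
      FR (RF mu) = Some (a', b', q, t), goodQ G (RF mu) a' b' q &
      [/\ t \in q, t \in RF mu, agent G M B t, mu \in [set a'; b'] & P mu = ext a' q t mu]].
  move=> mu [muT [//|[a [b [w [mab aT bT sep]]]]]] nag.
  have sp : sepT G M B T a b w by [].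
  have [a1 [b1 [w1 [sp1 m1 E1]]]] := HRF mu (ex_intro _ a (ex_intro _ b (ex_intro _ w (conj sp mab)))).
  have [a' [b' [q [t [EF [[w' [sp' E']] gq tq tR agt]]]]]] :=
    HFR (RF mu) (ex_intro _ a1 (ex_intro _ b1 (ex_intro _ w1 (conj sp1 E1)))).
  have tw := twoS _ _ _ sp1.
  have mab' : mu \in [set a'; b'].
    move: m1; rewrite !inE => /orP [/eqP ->|/eqP ->].
      by have := reg_attach symG irrG tw spl fs P0Ps ET sp1 sp'; rewrite -E1 E' !inE => ->.
    have sp1s := sepT_sym sp1.
    by have := reg_attach symG irrG tw spl fs P0Ps ET sp1s sp'; rewrite -region_sym -E1 E' !inE => ->.
  exists a1, b1, w1, a', b', q, t; split => //; split => //.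
  by case: (HP mu) => _ ->; rewrite // /ext0 EF.
exists P; split.
- move=> mu vm; case: (classic (agent G M B mu)) => ag.
    by case: (HP mu) => -> // _; split => //; rewrite /= andbT.
  have [a [b [w [a' [b' [q [t [sp ER EF gq [tq tR agt mab' EP]]]]]]]]] := key mu vm ag.
  have [pth u l al] := ext_props symG gq tq tR mab'.
  rewrite EP; split => //; first by rewrite l.
  apply/allP => z /(allP al) zR; rewrite ER in zR.
  exact (reg_noT symG irrG (twoS _ _ _ sp) spl fs P0Ps ET sp zR).
- by move=> mu _ ag; case: (HP mu) => ->.
- move=> mu nu vm vn mn.
  case: (classic (agent G M B mu)) => agm.
    by case: (HP mu) => -> // _; apply: disjP.
  have [a [b [w [a' [b' [q [t [sp ER EF gq [tq tR agt mab' EP]]]]]]]]] := key mu vm agm.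
  have tw := twoS _ _ _ sp.
  have [_ _ _ al] := ext_props symG gq tq tR mab'.
  have inR z : z \in inner mu (P mu) -> z \in region G B a b w.
    by rewrite EP => /inner_sub /(allP al); rewrite ER.
  have noT z : z \in region G B a b w -> z \notin T.
    move=> zR; exact (reg_noT symG irrG tw spl fs P0Ps ET sp zR).
  have nuT : nu \in T by case: vn.
  case: (classic (agent G M B nu)) => agn.
    case: (HP nu) => -> // _; apply: disjP => z /inR zR; rewrite inE => /eqP ez.
    by move: (noT _ zR); rewrite ez nuT.
  have [a2 [b2 [w2 [a2' [b2' [q2 [t2 [sp2 ER2 EF2 gq2 [tq2 tR2 agt2 mab2 EP2]]]]]]]]] := key nu vn agn.
  case: (eqVneq (RF mu) (RF nu)) => [eR|neR].
    move: EF2 gq2 tR2 mab2 EP2 tq2; rewrite -eR EF => [[<- <- <- <-]] _ _ mab2 EP2 _.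
    rewrite EP EP2; exact (ext_disj symG gq tq tR mab' mab2 mn).
  apply: disjP => z /inR zR; rewrite inE => /orP [/eqP ez|zn].
    by move: (noT _ zR); rewrite ez nuT.
  have [_ _ _ al2] := ext_props symG gq2 tq2 tR2 mab2.
  move: zn; rewrite EP2 => /(allP al2); rewrite ER2; apply/negP.
  have ne : region G B a b w != region G B a2 b2 w2 by rewrite -ER -ER2.
  exact (reg_disj symG irrG tw spl fs P0Ps ET sp sp2 ne zR).
Qed.
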